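(* Let $\varepsilon>0$, $\delta\in(0,1)$, $p=1-e^{-\varepsilon}$ and $k=\left\lceil\frac{1}{\varepsilon}\ln\left(\frac{e^{\varepsilon}+2\delta-1}{(e^{\varepsilon}+1)\delta}\right)\right\rceil$. Let $Q$ be a finite set of partitions, and consider databases $D$ in which each user is associated with at most one partition $q\in Q$. For $q\in Q$ let $c_q(D)$ be the number of users in $D$ associated with $q$, and let $Q_D=\{q\in Q: c_q(D)>0\}$. Let $(X_q)_{q\in Q}$ be i.i.d. random variables with the $k$-truncated symmetric geometric distribution with parameter $p$, and set $\hat c_q(D)=c_q(D)+X_q$. Then the mechanism that outputs the set $\{(q,\hat c_q(D)): q\in Q_D \text{ and } \hat c_q(D)>k\}$ is $(\varepsilon,\delta)$-differentially private.
   Context: For $p\in(0,1)$ and an integer $k\ge1$, the $k$-truncated symmetric geometric distribution with parameter $p$ is the distribution on $\mathbb{Z}$ with $\Pr[X=x]=c\,(1-p)^{|x|}$ for $x\in[-k,k]\cap\mathbb{Z}$ and $0$ otherwise, where $c=\frac{p}{1+(1-p)-2(1-p)^{k+1}}$. A randomized mechanism $\mathcal{M}$ is $(\varepsilon,\delta)$-differentially private if for any databases $D,D'$ where $D'$ is obtained from $D$ by adding or removing one user, and all sets $S$ of outputs, $\Pr[\mathcal{M}(D)\in S]\le e^{\varepsilon}\Pr[\mathcal{M}(D')\in S]+\delta$. *)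

(* Defs.v *)
From HB Require Import structures.
From mathcomp Require Import all_boot all_order all_algebra.
From mathcomp Require Import finmap.
From mathcomp Require Import reals.
From mathcomp Require Import sequences exp.

Unset Printing Implicit Defensive.

Import Order.TTheory GRing.Theory Num.Theory.
Local Open Scope ring_scope.

Definition tgeom_const {R : realType} (p : R) (k : nat) : R :=
  p / (1 + (1 - p) - 2 * (1 - p) ^+ k.+1).

Definition tgeom_pmf {R : realType} (p : R) (k : nat) (x : int) : R :=
  if (`|x| <= k%:Z)%R then tgeom_const p k * (1 - p) ^+ `|x|%N else 0.

(** A noise value in [-k,k] is encoded by an ordinal i < 2k+1, value i - k. *)
Definition noise_val {k : nat} (i : 'I_(k.*2.+1)) : int := (i%:Z - k%:Z)%R.

(** Databases: finite lists of users (type U); each user is associated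
    with at most one partition, given by [part : U -> option Q]. *)
Definition count_q {U : Type} {Q : eqType} (part : U -> option Q)
  (D : seq U) (q : Q) : nat :=
  count (fun u => part u == Some q) D.

Definition neighbors {U : Type} (D D' : seq U) : Prop :=
  (exists D1 D2 u, D = D1 ++ D2 /\ D' = D1 ++ u :: D2) \/
  (exists D1 D2 u, D' = D1 ++ D2 /\ D = D1 ++ u :: D2).

(** The mechanism, as a deterministic function of the database and the
    noise vector (X_q)_q: outputs {(q, c_q(D) + X_q) : c_q(D) > 0, c_q(D)+X_q > k}. *)
Definition mech_out {U : Type} {Q : finType} (part : U -> option Q) (k : nat)
  (D : seq U) (x : {ffun Q -> 'I_(k.*2.+1)}) : {fset (Q * int)} :=
  [fset ((q, (count_q part D q)%:Z + noise_val (x q))%R) | q : Q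
        & ((0 < count_q part D q)%N &&
           (k%:Z < (count_q part D q)%:Z + noise_val (x q))%R)]%fset.

Definition mech_prob {R : realType} {U : Type} {Q : finType}
  (part : U -> option Q) (p : R) (k : nat) (D : seq U)
  (S : pred {fset (Q * int)}) : R :=
  \sum_(x : {ffun Q -> 'I_(k.*2.+1)})
     (\prod_(q : Q) tgeom_pmf p k (noise_val (x q))) *
     (if S (mech_out part k D x) then 1 else 0).

Definition mech_dp {R : realType} {U : Type} {Q : finType}
  (part : U -> option Q) (p : R) (k : nat) (eps delta : R) : Prop :=
  forall (D D' : seq U), neighbors D D' ->
  forall S : pred {fset (Q * int)},
    mech_prob part p k D S <= expR eps * mech_prob part p k D' S + delta.

(* Main.v *)
Require Import Defs.
From HB Require Import structures.
From mathcomp Require Import all_boot all_order all_algebra.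
From mathcomp Require Import finmap.
From mathcomp Require Import reals.
From mathcomp Require Import sequences exp.
From mathcomp Require Import zify ring lra.
Import Order.TTheory GRing.Theory Num.Theory.
Local Open Scope ring_scope.

Definition upd {Q I : finType} (q0 : Q) (x : {ffun Q -> I}) (i : I) : {ffun Q -> I} :=
  [ffun q => if q == q0 then i else x q].

Lemma prod_upd (R : realType) (Q I : finType) (f : I -> R) (q0 : Q) x i :
  \prod_q f (upd q0 x i q) = f i * \prod_(q | q != q0) f (x q).
Proof.
rewrite (bigD1 q0) //= /upd ffunE eqxx; congr (_ * _).
by apply: eq_bigr => q /negbTE Hq; rewrite ffunE Hq.
Qed.

Lemma sum_fix (R : realType) (Q I : finType) (f : I -> R) (q0 : Q) (e : I) :
  \sum_i f i = 1 ->
  \sum_(x : {ffun Q -> I} | x q0 == e) \prod_q f (x q) = f e.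
Proof.
move=> Hs.
pose G q j := if q == q0 then (if j == e then f j else 0) else f j.
have := @bigA_distr_bigA R 0 1 *%R +%R Q I G.
have -> : \prod_q \sum_j G q j = f e.
  rewrite (bigD1 q0) //= [X in _ * X]big1 ?mulr1.
    by rewrite /G eqxx -big_mkcond big_pred1_eq.
  by move=> q /negbTE Hq; rewrite /G Hq.
move=> ->; rewrite big_mkcond /=; apply: eq_bigr => x _.
rewrite (bigD1 q0) //= [in RHS](bigD1 q0) //=; unfold G; rewrite eqxx.
case: eqP => _; last by rewrite mul0r.
congr (_ * _); apply: eq_bigr => q /negbTE Hq; by rewrite Hq.
Qed.

Lemma key (R : realType) (Q I : finType) (T : Type) (f : I -> R) (E delta : R)
  (q0 : Q) (e : I) (s : I -> I) (O O' : {ffun Q -> I} -> T) (S : pred T) :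
  (forall i, 0 <= f i) -> \sum_i f i = 1 -> 0 <= E ->
  {in predC1 e &, injective s} ->
  (forall i, i != e -> f i <= E * f (s i)) ->
  f e <= delta ->
  (forall x : {ffun Q -> I}, x q0 != e -> O x = O' (upd q0 x (s (x q0)))) ->
  \sum_(x : {ffun Q -> I}) (\prod_q f (x q)) * (if S (O x) then 1 else 0) <=
  E * \sum_(x : {ffun Q -> I}) (\prod_q f (x q)) * (if S (O' x) then 1 else 0) + delta.
Proof.
move=> f0 fs E0 sinj fE fe HO.
have w0 : forall x : {ffun Q -> I}, 0 <= \prod_q f (x q).
  by move=> x; apply: prodr_ge0 => q _.
have ind01 : forall b : bool, 0 <= (if b then 1 else 0 : R) <= 1.
  by case=> /=; rewrite ?lexx ?ler01.
rewrite (bigID (fun x : {ffun Q -> I} => x q0 == e)) /= addrC lerD //.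
  pose h (x : {ffun Q -> I}) := upd q0 x (s (x q0)).
  pose F (x : {ffun Q -> I}) := (\prod_q f (x q)) * (if S (O' x) then 1 else 0).
  have F0 : forall x, 0 <= F x.
    by move=> x; apply: mulr_ge0 => //; case/andP: (ind01 (S (O' x))).
  apply: (@le_trans _ _ (E * \sum_(x : {ffun Q -> I} | x q0 != e) F (h x))).
    rewrite mulr_sumr; apply: ler_sum => x Hx.
    rewrite HO // /F /h prod_upd mulrA.
    have -> : \prod_q f (x q) = f (x q0) * \prod_(q | q != q0) f (x q).
      by rewrite (bigD1 q0).
    rewrite !mulrA; apply: ler_wpM2r; first by case/andP: (ind01 (S (O' (upd q0 x (s (x q0)))))).
    apply: ler_wpM2r; first by apply: prodr_ge0.
    exact: fE.
  apply: ler_wpM2l => //.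
  pose A := [set x : {ffun Q -> I} | x q0 != e].
  have -> : \sum_(x : {ffun Q -> I} | x q0 != e) F (h x) = \sum_(x in A) F (h x).
    by apply: eq_bigl => x; rewrite inE.
  rewrite -big_imset /=; last first.
    move=> x y; rewrite !inE => Hx Hy Hxy.
    have Hq0 : x q0 = y q0.
      apply: sinj; rewrite ?inE //.
      by have := congr1 (fun z : {ffun Q -> I} => z q0) Hxy; rewrite /h /upd !ffunE eqxx.
    apply/ffunP => q; case: (eqVneq q q0) => [->//|Hq].
    by have := congr1 (fun z : {ffun Q -> I} => z q) Hxy; rewrite /h /upd !ffunE (negbTE Hq).
  rewrite big_mkcond /=; apply: ler_sum => x _.
  by case: ifP => _ //; apply: F0.
apply: (@le_trans _ _ (\sum_(x : {ffun Q -> I} | x q0 == e) \prod_q f (x q))).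
  apply: ler_sum => x _; rewrite -[X in _ <= X]mulr1; apply: ler_wpM2l => //.
  by case/andP: (ind01 (S (O x))).
by rewrite sum_fix.
Qed.

Lemma geo (R : realType) (r : R) n : (1 - r) * \sum_(i < n) r ^+ i = 1 - r ^+ n.
Proof.
elim: n => [|n IH]; first by rewrite big_ord0 mulr0 expr0 subrr.
by rewrite big_ord_recr /= mulrDr IH exprS; ring.
Qed.

Lemma sum_abs (R : realType) (r : R) k :
  (1 - r) * \sum_(i < k.*2.+1) r ^+ absz (noise_val i) = 1 + r - 2 * r ^+ k.+1.
Proof.
rewrite /noise_val.
rewrite -(big_mkord xpredT (fun i : nat => r ^+ absz (i%:Z - k%:Z))%R) /=.
rewrite (big_cat_nat (n := k)) //=; last by lia.
have -> : \sum_(k <= i < k.*2.+1) r ^+ absz (i%:Z - k%:Z)%R = \sum_(i < k.+1) r ^+ i.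
  rewrite -{1}(add0n k) big_addn.
  have -> : (k.*2.+1 - k = k.+1)%N by lia.
  rewrite big_mkord; apply: eq_bigr => i _; congr (_ ^+ _); lia.
have -> : \sum_(0 <= i < k) r ^+ absz (i%:Z - k%:Z)%R = r * \sum_(i < k) r ^+ i.
  rewrite big_nat_rev mulr_sumr -(big_mkord xpredT (fun i => r * r ^+ i)) /=.
  apply: eq_big_nat => i Hi; rewrite -exprS; congr (_ ^+ _); lia.
by rewrite mulrDr mulrCA geo geo exprS; ring.
Qed.

Lemma den_pos (R : realType) (r : R) k : 0 < r -> r < 1 -> 0 < 1 + r - 2 * r ^+ k.+1.
Proof.
move=> r0 r1.
have h1 : r ^+ k <= 1 by apply: exprn_ile1; lra.
have h2 : r ^+ k.+1 <= r by rewrite exprS; nra.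
lra.
Qed.

Lemma f_eq (R : realType) (r : R) k (i : 'I_(k.*2.+1)) :
  tgeom_pmf (1 - r) k (noise_val i) =
  (1 - r) / (1 + r - 2 * r ^+ k.+1) * r ^+ absz (noise_val i).
Proof.
rewrite /tgeom_pmf /tgeom_const.
have -> : 1 - (1 - r) = r by ring.
have -> : (`|noise_val i| <= k%:Z)%R.
  rewrite /noise_val; have := ltn_ord i; lia.
by [].
Qed.

Lemma f_ge0 (R : realType) (r : R) k (i : 'I_(k.*2.+1)) : 0 < r -> r < 1 ->
  0 <= tgeom_pmf (1 - r) k (noise_val i).
Proof.
move=> r0 r1; rewrite f_eq; apply: mulr_ge0; last by apply: exprn_ge0; lra.
apply: divr_ge0; first lra.
by apply: ltW; apply: den_pos.
Qed.

Lemma f_sum (R : realType) (r : R) k : 0 < r -> r < 1 ->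
  \sum_(i < k.*2.+1) tgeom_pmf (1 - r) k (noise_val i) = 1.
Proof.
move=> r0 r1.
under eq_bigr => i _ do rewrite f_eq.
rewrite -mulr_sumr -mulrA mulrC -mulrA (mulrC (\sum_i _)) sum_abs.
have hd := @den_pos R r k r0 r1.
by rewrite mulVf // gt_eqF.
Qed.

Lemma f_shift (R : realType) (r E : R) k (i j : 'I_(k.*2.+1)) : 0 < r -> r < 1 ->
  E * r = 1 -> (absz (noise_val j) <= (absz (noise_val i)).+1)%N ->
  tgeom_pmf (1 - r) k (noise_val i) <= E * tgeom_pmf (1 - r) k (noise_val j).
Proof.
move=> r0 r1 Er hij; rewrite !f_eq.
set c := (1 - r) / _.
have c0 : 0 <= c by apply: divr_ge0; [lra | apply: ltW; apply: den_pos].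
have : r ^+ (absz (noise_val i)).+1 <= r ^+ absz (noise_val j).
  by apply: ler_wiXn2l => //; lra.
rewrite exprS => h.
have -> : r ^+ absz (noise_val i) = E * (r * r ^+ absz (noise_val i)).
  by rewrite mulrA Er mul1r.
have E0 : 0 <= E by nra.
rewrite mulrCA; apply: ler_wpM2l => //.
by apply: ler_wpM2l.
Qed.

Lemma endpoint (R : realType) (eps delta : R) (k : nat) (e : 'I_(k.*2.+1)) :
  0 < eps -> 0 < delta -> delta < 1 ->
  k%:Z = Num.ceil (eps^-1 * ln ((expR eps + 2 * delta - 1) /
                                  ((expR eps + 1) * delta))) ->
  absz (noise_val e) = k ->
  tgeom_pmf (1 - expR (- eps)) k (noise_val e) <= delta.
Proof.
move=> he hd0 hd1 hk hek.
set r := expR (- eps); set E := expR eps.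
have r0 : 0 < r by apply: expR_gt0.
have r1 : r < 1 by rewrite /r expR_lt1 oppr_lt0.
have Er : E * r = 1 by rewrite /E /r expRxMexpNx_1.
have E1 : 1 <= E by rewrite /E -expR0 ler_expR; apply: ltW.
set A := E + 2 * delta - 1; set B := (E + 1) * delta.
have A0 : 0 < A by rewrite /A; lra.
have B0 : 0 < B by rewrite /B; apply: mulr_gt0 => //; lra.
set L := eps^-1 * ln (A / B).
have HL : L <= k%:R.
  have := ceil_le_int L k%:Z; rewrite -hk lexx => H.
  have : L <= (k%:Z)%:~R by rewrite -H.
  by rewrite pmulrn.
have HL2 : ln (A / B) <= eps * k%:R.
  have -> : ln (A / B) = eps * L by rewrite /L mulrA mulfV ?mul1r // gt_eqF.
  by apply: ler_wpM2l => //; apply: ltW.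
have HAB : A / B <= E ^+ k.
  have hp : A / B \in Num.pos by rewrite posrE divr_gt0.
  rewrite -(lnK hp) /E -expRM_natl ler_expR [_ * eps]mulrC.
  exact: HL2.
set t := r ^+ k.
have Et : E ^+ k * t = 1 by rewrite /t -exprMn Er expr1n.
have t0 : 0 < t by apply: exprn_gt0.
have HAt : A * t <= B.
  have h := ler_wpM2r (ltW t0) HAB; rewrite Et in h.
  have -> : A * t = (A / B * t) * B by field; rewrite gt_eqF.
  by rewrite -[X in _ <= X]mul1r; apply: ler_wpM2r => //; apply: ltW.
have HAtr : t + t * (2 * delta * r - r) <= delta + delta * r.
  have := ler_wpM2l (ltW r0) HAt.
  have -> : r * (A * t) = t * (E * r) + t * (2 * delta * r - r) by rewrite /A; ring.
  have -> : r * B = delta * (E * r) + delta * r by rewrite /B; ring.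
  by rewrite Er !mulr1.
rewrite f_eq hek -/t.
have hd := @den_pos R r k r0 r1.
rewrite mulrAC ler_pdivrMr //.
have -> : r ^+ k.+1 = r * t by rewrite /t exprS.
nra.
Qed.

Lemma out_eq (Q : finType) (U : Type) (part : U -> option Q) (k : nat) (D D' : seq U)
  (x y : {ffun Q -> 'I_(k.*2.+1)}) :
  (forall q, ((count_q part D q)%:Z + noise_val (x q) =
              (count_q part D' q)%:Z + noise_val (y q))%R) ->
  (forall q, ((0 < count_q part D q)%N && (k%:Z < (count_q part D q)%:Z + noise_val (x q))%R) =
             ((0 < count_q part D' q)%N && (k%:Z < (count_q part D' q)%:Z + noise_val (y q))%R)) ->
  mech_out part k D x = mech_out part k D' y.
Proof.
move=> H1 H2; apply/fsetP => z.
apply/imfsetP/imfsetP => -[q Hq ->]; exists q => //=.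
- by move: Hq; rewrite !inE H2.
- by rewrite H1.
- by move: Hq; rewrite !inE H2.
- by rewrite H1.
Qed.

Lemma count_ins (Q : finType) (U : Type) (part : U -> option Q) D1 D2 u q :
  count_q part (D1 ++ u :: D2) q = ((part u == Some q) + count_q part (D1 ++ D2) q)%N.
Proof. rewrite /count_q !count_cat /=; lia. Qed.

Lemma shift_dn (R : realType) (eps delta : R) (k : nat) (Q : finType) (U : Type)
  (part : U -> option Q) (D D' : seq U) (q0 : Q) (S : pred {fset (Q * int)}) :
  0 < eps -> 0 < delta -> delta < 1 ->
  k%:Z = Num.ceil (eps^-1 * ln ((expR eps + 2 * delta - 1) /
                                  ((expR eps + 1) * delta))) ->
  (forall q, q != q0 -> count_q part D' q = count_q part D q) ->
  count_q part D' q0 = (count_q part D q0).+1 ->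
  mech_prob part (1 - expR (- eps)) k D S <=
    expR eps * mech_prob part (1 - expR (- eps)) k D' S + delta.
Proof.
move=> he hd0 hd1 hk Hq Hq0.
set r := expR (- eps).
have r0 : 0 < r by apply: expR_gt0.
have r1 : r < 1 by rewrite /r expR_lt1 oppr_lt0.
have Er : expR eps * r = 1 by rewrite /r expRxMexpNx_1.
apply: (@key R Q 'I_(k.*2.+1) _ (fun i => tgeom_pmf (1 - r) k (noise_val i)) _ _ q0
          ord0 (fun i => inord i.-1)).
- by move=> i; apply: f_ge0.
- exact: f_sum.
- exact: expR_ge0.
- move=> i j; rewrite !inE => Hi Hj /(congr1 val); rewrite /= !inordK; last 2 first.
  1,2: by have := ltn_ord i; have := ltn_ord j; lia.
  move=> H; apply: val_inj => /=.
  have : (0 < i)%N by rewrite lt0n; apply: contraNneq Hi => h; apply/eqP/val_inj.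
  have : (0 < j)%N by rewrite lt0n; apply: contraNneq Hj => h; apply/eqP/val_inj.
  lia.
- move=> i Hi; apply: f_shift => //.
  rewrite /noise_val /= inordK; last by have := ltn_ord i; lia.
  have := ltn_ord i; lia.
- apply: endpoint => //; rewrite /noise_val /=; lia.
- move=> x Hx; apply: out_eq => q.
  + rewrite /upd ffunE; case: (eqVneq q q0) => [->|/Hq ->//].

    rewrite ?eqxx Hq0 /noise_val /= inordK; last exact: leq_ltn_trans (leq_pred _) (ltn_ord _).
    have : (0 < x q0)%N by rewrite lt0n; apply: contraNneq Hx => h; apply/eqP/val_inj.
    move: (count_q part D q0) (nat_of_ord (x q0)) => c m. lia.
  + rewrite /upd ffunE; case: (eqVneq q q0) => [->|/Hq ->//].
    rewrite ?eqxx Hq0 /noise_val /= inordK; last exact: leq_ltn_trans (leq_pred _) (ltn_ord _).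
    have : (0 < x q0)%N by rewrite lt0n; apply: contraNneq Hx => h; apply/eqP/val_inj.
    have := ltn_ord (x q0).
    move: (nat_of_ord (x q0)) => m.
    case: (count_q part D q0) => [|c] /=; lia.
Qed.

Lemma shift_up (R : realType) (eps delta : R) (k : nat) (Q : finType) (U : Type)
  (part : U -> option Q) (D D' : seq U) (q0 : Q) (S : pred {fset (Q * int)}) :
  0 < eps -> 0 < delta -> delta < 1 ->
  k%:Z = Num.ceil (eps^-1 * ln ((expR eps + 2 * delta - 1) /
                                  ((expR eps + 1) * delta))) ->
  (forall q, q != q0 -> count_q part D' q = count_q part D q) ->
  count_q part D q0 = (count_q part D' q0).+1 ->
  mech_prob part (1 - expR (- eps)) k D S <=
    expR eps * mech_prob part (1 - expR (- eps)) k D' S + delta.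
Proof.
move=> he hd0 hd1 hk Hq Hq0.
set r := expR (- eps).
have r0 : 0 < r by apply: expR_gt0.
have r1 : r < 1 by rewrite /r expR_lt1 oppr_lt0.
have Er : expR eps * r = 1 by rewrite /r expRxMexpNx_1.
have ltm : forall i : 'I_(k.*2.+1), i != ord_max -> (i < k.*2)%N.
  move=> i Hi; have := ltn_ord i; rewrite ltnS leq_eqVlt => /orP[/eqP h|//].
  by case/eqP: Hi; apply: val_inj.
apply: (@key R Q 'I_(k.*2.+1) _ (fun i => tgeom_pmf (1 - r) k (noise_val i)) _ _ q0
          ord_max (fun i => inord i.+1)).
- by move=> i; apply: f_ge0.
- exact: f_sum.
- exact: expR_ge0.
- move=> i j; rewrite !inE => /ltm Hi /ltm Hj /(congr1 val); rewrite /= !inordK //.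
  by move=> [] H; apply: val_inj.
- move=> i /ltm Hi; apply: f_shift => //.
  rewrite /noise_val /= inordK //; move: (nat_of_ord i) Hi => m; lia.
- apply: endpoint => //; rewrite /noise_val /=; lia.
- move=> x /ltm Hx; apply: out_eq => q.
  + rewrite /upd ffunE; case: (eqVneq q q0) => [->|/Hq ->//].
    rewrite ?eqxx Hq0 /noise_val /= inordK //.
    move: (count_q part D' q0) (nat_of_ord (x q0)) Hx => c m. lia.
  + rewrite /upd ffunE; case: (eqVneq q q0) => [->|/Hq ->//].
    rewrite ?eqxx Hq0 /noise_val /= inordK //.
    move: (nat_of_ord (x q0)) Hx => m.
    case: (count_q part D' q0) => [|c] /=; lia.
Qed.

Lemma same_counts (R : realType) (eps delta : R) (k : nat) (Q : finType) (U : Type)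
  (part : U -> option Q) (D D' : seq U) (S : pred {fset (Q * int)}) :
  0 < eps -> 0 < delta -> delta < 1 ->
  (forall q, count_q part D' q = count_q part D q) ->
  mech_prob part (1 - expR (- eps)) k D S <=
    expR eps * mech_prob part (1 - expR (- eps)) k D' S + delta.
Proof.
move=> he hd0 hd1 Hq.
set r := expR (- eps).
have r0 : 0 < r by apply: expR_gt0.
have r1 : r < 1 by rewrite /r expR_lt1 oppr_lt0.
have E1 : 1 <= expR eps by rewrite -expR0 ler_expR; apply: ltW.
have -> : mech_prob part (1 - r) k D' S = mech_prob part (1 - r) k D S.
  apply: eq_bigr => x _; rewrite (@out_eq Q U part k D' D x x) // => q; by rewrite Hq.
have M0 : 0 <= mech_prob part (1 - r) k D S.
  apply: sumr_ge0 => x _; apply: mulr_ge0.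
    by apply: prodr_ge0 => q _; apply: f_ge0.
  by case: ifP.
nra.
Qed.

Theorem theorem6 (R : realType) (eps delta p : R) (k : nat)
  (Q : finType) (U : Type) (part : U -> option Q) :
  0 < eps -> 0 < delta -> delta < 1 ->
  p = 1 - expR (- eps) ->
  k%:Z = Num.ceil (eps^-1 * ln ((expR eps + 2 * delta - 1) /
                                  ((expR eps + 1) * delta))) ->
  mech_dp part p k eps delta.
Proof.
move=> he hd0 hd1 -> hk D D' [[D1 [D2 [u [-> ->]]]] | [D1 [D2 [u [-> ->]]]]] S.
- case Hu: (part u) => [q0|].
  + apply: (@shift_dn R eps delta k Q U part _ _ q0) => //.
    * by move=> q Hq; rewrite count_ins Hu (inj_eq (@Some_inj _)) eq_sym (negbTE Hq).
    * by rewrite count_ins Hu eqxx.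
  + apply: same_counts => // q; by rewrite count_ins Hu.
- case Hu: (part u) => [q0|].
  + apply: (@shift_up R eps delta k Q U part _ _ q0) => //.
    * by move=> q Hq; rewrite count_ins Hu (inj_eq (@Some_inj _)) eq_sym (negbTE Hq).
    * by rewrite count_ins Hu eqxx.
  + apply: same_counts => // q; by rewrite count_ins Hu.
Qed.
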